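(* Let $(X_n,\|\cdot\|_n)_{n\ge1}$ be a sequence of Banach spaces, let $Z=(\sum_{n=1}^\infty\oplus X_n)_1$ with norm $\|(x_n)\|_Z=\sum_n\|x_n\|_n$, and let $(X,\|\cdot\|)$ be the completion of $c_{00}((X_n))$ under the norm defined in the context. Then $Z$ and $X$ are $2$-isomorphic; more precisely, the identity map of $c_{00}((X_n))$ extends to a linear isomorphism $T:Z\to X$ with $\frac12\|z\|_Z\le\|Tz\|\le\|z\|_Z$ for all $z\in Z$.
   Context: $c_{00}((X_n))$ is the vector space of sequences $(x_1,x_2,\dots)$ with $x_k\in X_k$ and only finitely many $x_k\ne0$; $(x_1,\dots,x_n)$ denotes $(x_1,\dots,x_n,0,0,\dots)$. The norm is defined inductively: $\|(x_1)\|=\|x_1\|_1$ (the norm of $X_1$), and for $n\ge2$, $$\|(x_1,\dots,x_n)\|=\Big(1-\tfrac{1}{n+1}\Big)\big(\|x_n\|_n+\|(x_1,\dots,x_{n-1})\|\big)+\tfrac{1}{n+1}\max\Big\{\tfrac{\|x_n\|_n}{n},\ \|(x_1,\dots,x_{n-1})\|\Big\}.$$ *)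

(* Defs.v *)
From HB Require Import structures.
From mathcomp Require Import all_boot all_order all_algebra.
From mathcomp Require Import all_classical all_reals all_analysis.
Set Implicit Arguments. Unset Strict Implicit. Unset Printing Implicit Defensive.
Import Order.TTheory GRing.Theory Num.Theory.
Import numFieldNormedType.Exports.
Local Open Scope classical_set_scope.
Local Open Scope ring_scope.

(* Sequences (x_1, x_2, ...) with x_k in X_k are modelled as dependent
   functions x : forall k : nat, X k, where the paper's x_k is x (k-1)
   (0-based indexing: x 0 is the paper's x_1, living in X 0 = paper's X_1). *)

Definition c00 (R : realType) (X : nat -> normedModType R) : set (forall k, X k) :=
  [set x | exists N : nat, forall k : nat, (N <= k)%N -> x k = 0].

(* cnorm_upto x n = || (x_1, ..., x_n) ||  (paper indexing), defined by the
   inductive formula of the paper: ||(x_1)|| = ||x_1||_1 and for n >= 2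
   ||(x_1..x_n)|| = (1 - 1/(n+1)) (||x_n|| + ||(x_1..x_{n-1})||)
                    + 1/(n+1) max(||x_n||/n, ||(x_1..x_{n-1})||).
   The value at n = 0 is 0 (empty sequence; not used by the paper). *)
Fixpoint cnorm_upto (R : realType) (X : nat -> normedModType R)
    (x : forall k, X k) (n : nat) : R :=
  match n with
  | 0%N => 0
  | 1%N => `|x 0%N|
  | (m.+1) as n' =>
      let p := cnorm_upto x m in
      let a := `|x m| in
      (1 - 1 / (n'.+1)%:R) * (a + p) + 1 / (n'.+1)%:R * Num.max (a / n'%:R) p
  end.

Definition in_l1 (R : realType) (X : nat -> normedModType R) (z : forall k, X k) : Prop :=
  cvgn (series (fun k => `|z k|)).

Definition normZ (R : realType) (X : nat -> normedModType R) (z : forall k, X k) : R :=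
  limn (series (fun k => `|z k|)).

(* Main.v *)
Require Import Defs.
From HB Require Import structures.
From mathcomp Require Import all_boot all_order all_algebra.
From mathcomp Require Import all_classical all_reals all_analysis.
From mathcomp Require Import ring lra.
Import Order.TTheory GRing.Theory Num.Theory.
Import numFieldNormedType.Exports.
Local Open Scope classical_set_scope.
Local Open Scope ring_scope.

Section Bounds.
Variables (R : realType) (X : nat -> normedModType R).
Implicit Types x : forall k, X k.

Lemma cnorm_S x m : (0 < m)%N -> cnorm_upto x m.+1 =
  (1 - 1 / (m.+2)%:R) * (`|x m| + cnorm_upto x m)
  + 1 / (m.+2)%:R * Num.max (`|x m| / (m.+1)%:R) (cnorm_upto x m).
Proof. by case: m. Qed.

Lemma cnorm_bounds x n :
  (\sum_(0 <= k < n) `|x k|) / 2 <= cnorm_upto x n /\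
  cnorm_upto x n <= \sum_(0 <= k < n) `|x k|.
Proof.
elim: n => [|m IH]; first by rewrite big_geq // mul0r.
case: m IH => [|m] IH.
  by rewrite big_nat1 /=; split; [rewrite ler_pdivrMr // ler_peMr // lerDl|].
rewrite cnorm_S // big_nat_recr //.
move: IH; set s := \sum_(0 <= k < m.+1) _; set p := cnorm_upto x m.+1.
set a := `|x m.+1|; set c := 1 / (m.+3)%:R; set M := Num.max (a / _) p; move=> [IH1 IH2].
have a0 : 0 <= a by rewrite /a normr_ge0.
have c0 : 0 <= c by rewrite /c divr_ge0.
have c2 : c <= 1/2.
  rewrite /c ler_pdivrMr // mulrC mulrA mulr1 ler_pdivlMr // mul1r.
  by rewrite ler_nat.
have pM : p <= M by rewrite /M le_max; apply/orP; right.
have Map : M <= a + p.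
  rewrite /M ge_max; apply/andP; split; last by lra.
  apply: le_trans (_ : a <= a + p); last by lra.
  by rewrite ler_pdivrMr // ler_peMr // ler1n.
have h1 : 0 <= c * (M - p) by rewrite mulr_ge0 // subr_ge0.
have h2 : 0 <= c * (a + p - M) by rewrite mulr_ge0 // subr_ge0.
have h3 : 0 <= (1/2 - c) * a by rewrite mulr_ge0 // subr_ge0.
have e1 : (1-c)*(a+p) + c * M = a + p - c * a - c * p + c * M by ring.
rewrite e1.
rewrite mulrBr in h1; rewrite mulrBr !mulrDr in h2; rewrite mulrBl in h3.
rewrite /=. split; lra.
Qed.
End Bounds.

Section Main.
Variables (R : realType) (X : nat -> completeNormedModType R)
  (Xc : completeNormedModType R) (j : (forall k, X k) -> Xc).
Hypothesis j_add : forall x y, c00 x -> c00 y -> j (fun k => x k + y k) = j x + j y.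
Hypothesis j_scale : forall (a : R) x, c00 x -> j (fun k => a *: x k) = a *: j x.
Hypothesis j_isom : forall x (N : nat), (forall k : nat, (N <= k)%N -> x k = 0) ->
                `|j x| = cnorm_upto x N.
Local Notation V := (forall k, X k).
Implicit Types (x y z : V).

Definition trunc z n : V := fun k => if (k < n)%N then z k else 0.
Definition S z : R ^nat := series (fun k => `|z k|).
Lemma SE z n : S z n = \sum_(0 <= k < n) `|z k|. Proof. by []. Qed.

Lemma feq (f g : V) : (forall k, f k = g k) -> f = g.
Proof. exact: functional_extensionality_dep. Qed.

Lemma c00_trunc z n : c00 (trunc z n).
Proof. by exists n => k kn; rewrite /trunc ltnNge kn. Qed.

Lemma c00_scale (a : R) x : c00 x -> c00 (fun k => a *: x k).
Proof. by case=> N HN; exists N => k /HN ->; rewrite scaler0. Qed.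

Lemma c00_add x y : c00 x -> c00 y -> c00 (fun k => x k + y k).
Proof.
case=> N HN [M HM]; exists (maxn N M) => k; rewrite geq_max => /andP[/HN -> /HM ->].
by rewrite addr0.
Qed.

Lemma j_sub x y : c00 x -> c00 y -> j (fun k => x k - y k) = j x - j y.
Proof.
move=> cx cy.
have -> : (fun k => x k - y k) = (fun k => x k + (fun k => (-1) *: y k) k).
  by apply: feq => k; rewrite scaleN1r.
transitivity (j x + j (fun k => (-1) *: y k)).
  exact: (j_add _ _ cx (c00_scale (-1) _ cy)).
transitivity (j x + (-1) *: j y); last by rewrite scaleN1r.
congr (_ + _); exact: (@j_scale (-1) y cy).
Qed.

Lemma S_ge0 z n : 0 <= S z n.
Proof. by rewrite SE sumr_ge0. Qed.

Lemma S_split z {m n} : (m <= n)%N -> S z n = S z m + \sum_(m <= k < n) `|z k|.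
Proof. by move=> mn; rewrite !SE (@big_cat_nat _ _ _ m) //. Qed.

Lemma S_mono z {m n} : (m <= n)%N -> S z m <= S z n.
Proof. by move=> mn; rewrite (S_split z mn) lerDl sumr_ge0. Qed.

Lemma j_le x N : (forall k, (N <= k)%N -> x k = 0) -> `|j x| <= S x N.
Proof. by move=> H; rewrite (j_isom _ _ H) SE; case: (@cnorm_bounds _ (fun k => X k) x N). Qed.

Lemma j_ge x N : (forall k, (N <= k)%N -> x k = 0) -> S x N <= 2 * `|j x|.
Proof.
move=> H; rewrite (j_isom _ _ H) SE; case: (@cnorm_bounds _ (fun k => X k) x N) => H1 _.
by rewrite -ler_pdivrMl // mulrC.
Qed.

Lemma j_le_any x n : c00 x -> S x n <= 2 * `|j x|.
Proof.
case=> N HN; apply: le_trans (S_mono x (leq_maxl n N)) _.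
by apply: j_ge => k; rewrite geq_max => /andP[_ /HN].
Qed.

Lemma l1_le {z} n : in_l1 z -> S z n <= normZ z.
Proof.
move=> hz; apply: (nondecreasing_cvgn_le (u_ := S z)) => //.
by move=> a b; apply: S_mono.
Qed.

Definition T z : Xc := limn (fun n => j (trunc z n)).

Lemma trunc_diff z m n : (m <= n)%N ->
  `|j (trunc z n) - j (trunc z m)| <= \sum_(m <= k < n) `|z k|.
Proof.
move=> mn; rewrite -j_sub; [|exact: c00_trunc|exact: c00_trunc].
apply: le_trans (j_le _ n _) _.
  move=> k nk; rewrite /trunc ltnNge nk /= ifF ?subr0 //.
  by apply/negbTE; rewrite -leqNgt (leq_trans mn nk).
rewrite (S_split _ mn) SE (eq_big_nat _ _ (F2 := fun=> 0)); last first.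
  by move=> k /andP[_ km]; rewrite /trunc km (leq_trans km mn) subrr normr0.
rewrite big1 // add0r le_eqVlt; apply/orP; left; apply/eqP.
apply: eq_big_nat => k /andP[mk kn].
by rewrite /trunc kn ltnNge mk /= subr0.
Qed.


Lemma S_cvg {z} : in_l1 z -> S z @ \oo --> normZ z.
Proof. by move=> h; exact: h. Qed.

Lemma T_lim {z} : in_l1 z -> (fun n => j (trunc z n)) @ \oo --> T z.
Proof.
move=> hz; apply: cauchy_cvg; apply: cauchy_exP => e e0.
have [N _ HN] := (proj1 (cvgrPdist_lt _ _) (S_cvg hz)) e e0.
exists (j (trunc z N)); exists N => // n /= Nn.
rewrite -ball_normE /ball_ /= distrC.
apply: le_lt_trans (trunc_diff z N n Nn) _.
have := HN N (leqnn N) => /= h.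
have h2 := l1_le n hz.
rewrite (S_split z Nn) in h2.
apply: le_lt_trans h; rewrite ger0_norm; first by lra.
by rewrite subr_ge0 l1_le.
Qed.

Lemma T_c00 x : c00 x -> T x = j x.
Proof.
case=> N HN; apply/cvg_lim => //; apply: cvg_near_cst.
exists N => // n /= Nn; congr j; apply: feq => k; rewrite /trunc.
case: ifPn => // /negbTE kn; rewrite HN //.
by apply: leq_trans Nn _; rewrite leqNgt kn.
Qed.

Lemma Strunc z n : S (trunc z n) n = S z n.
Proof. by rewrite !SE; apply: eq_big_nat => k /andP[_ kn]; rewrite /trunc kn. Qed.

Lemma jtrunc_bounds z n : S z n / 2 <= `|j (trunc z n)| /\ `|j (trunc z n)| <= S z n.
Proof.
have H : forall k, (n <= k)%N -> trunc z n k = 0.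
  by move=> k nk; rewrite /trunc ltnNge nk.
rewrite (j_isom _ _ H) -Strunc SE.
exact: (@cnorm_bounds _ (fun k => X k) (trunc z n) n).
Qed.

Lemma T_norm z : in_l1 z -> normZ z / 2 <= `|T z| /\ `|T z| <= normZ z.
Proof.
move=> hz.
have Hn : `|j (trunc z n)| @[n --> \oo] --> `|T z| .
  by apply: cvg_norm; exact: T_lim.
split.
  have H2 : 2 * `|j (trunc z n)| @[n --> \oo] --> 2 * `|T z| .
    by apply: cvgMr.
  suff : normZ z <= 2 * `|T z| by lra.
  rewrite -(cvg_lim _ H2) //; apply: ler_lim; first exact: hz.
    by apply/cvg_ex; exists (2 * `|T z|).
  apply: nearW => n /=; have [h _] := jtrunc_bounds z n. change (S z n <= 2 * `|j (trunc z n)|); lra.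
rewrite -(cvg_lim _ Hn) //; apply: ler_lim.
- by apply/cvg_ex; exists `|T z|.
- exact: hz.
apply: nearW => n /=; have [_ h] := jtrunc_bounds z n; change (`|j (trunc z n)| <= S z n); lra.
Qed.

Lemma jtrunc_lin (a : R) z1 z2 n :
  j (trunc (fun k => a *: z1 k + z2 k) n) = a *: j (trunc z1 n) + j (trunc z2 n).
Proof.
transitivity (j (fun k => (fun k => a *: trunc z1 n k) k + trunc z2 n k)).
  by congr j; apply: feq => k; rewrite /trunc; case: ifP => _ //; rewrite scaler0 addr0.
transitivity (j (fun k => a *: trunc z1 n k) + j (trunc z2 n)).
  exact: (j_add _ _ (c00_scale a _ (c00_trunc z1 n)) (c00_trunc z2 n)).
congr (_ + _); exact: (j_scale a _ (c00_trunc z1 n)).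
Qed.

Lemma T_lin (a : R) z1 z2 : in_l1 z1 -> in_l1 z2 ->
  T (fun k => a *: z1 k + z2 k) = a *: T z1 + T z2.
Proof.
move=> h1 h2; apply/cvg_lim => //.
have -> : (fun n => j (trunc (fun k => a *: z1 k + z2 k) n)) =
          (fun n => a *: j (trunc z1 n) + j (trunc z2 n)).
  by apply: funext => n; exact: jtrunc_lin.
apply: cvgD; last exact: T_lim.
by apply: cvgZr; exact: T_lim.
Qed.

Lemma l1_lin (a : R) z1 z2 : in_l1 z1 -> in_l1 z2 -> in_l1 (fun k => a *: z1 k + z2 k).
Proof.
move=> h1 h2; rewrite /in_l1.
apply: (series_le_cvg (v_ := fun k => `|a| * `|z1 k| + `|z2 k|)).
- by [].
- by move=> k; rewrite addr_ge0 // mulr_ge0.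
- by move=> k /=; apply: le_trans (ler_normD _ _) _; rewrite normrZ.
have -> : (fun k => `|a| * `|z1 k| + `|z2 k|) =
          (`|a| *: (fun k => `|z1 k|)) + (fun k => `|z2 k|) by apply: funext.
apply: is_cvg_seriesD => //; exact: is_cvg_seriesZ.
Qed.

Lemma l1_zero z : in_l1 z -> normZ z <= 0 -> forall k, z k = 0.
Proof.
move=> hz h0 k; apply/normr0_eq0/eqP; rewrite eq_le normr_ge0 andbT.
apply: le_trans h0; apply: le_trans (l1_le k.+1 hz).
by rewrite SE big_nat_recr //= lerDr sumr_ge0.
Qed.

Lemma term_le_S z k : `|z k| <= S z k.+1.
Proof. by rewrite SE big_nat_recr //= lerDr sumr_ge0. Qed.

Lemma c00_sub x y : c00 x -> c00 y -> c00 (fun k => x k - y k).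
Proof.
case=> N HN [M HM]; exists (maxn N M) => k; rewrite geq_max => /andP[/HN -> /HM ->].
by rewrite subr0.
Qed.

Lemma S_cvg_pt (u : nat -> V) (w : V) :
  (forall k, (fun M => u M k) @ \oo --> w k) ->
  forall n, (fun M => S (u M) n) @ \oo --> S w n.
Proof.
move=> H; elim=> [|n IH].
  have -> : (fun M => S (u M) 0) = fun=> 0 by apply: funext => M; rewrite SE big_geq.
  by rewrite SE big_geq //; exact: cvg_cst.
have -> : (fun M => S (u M) n.+1) = (fun M => S (u M) n + `|u M n|).
  by apply: funext => M; rewrite !SE big_nat_recr.
rewrite SE big_nat_recr //= -SE; apply: cvgD => //; apply: cvg_norm; exact: H.
Qed.

Lemma surj : closure (j @` (@c00 R (fun k => X k))) = setT ->
  forall y : Xc, exists2 z, in_l1 z & T z = y.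
Proof.
move=> hd y.
have happ : forall m : nat, exists x, c00 x /\ `|y - j x| < m.+1%:R^-1.
  move=> m; have : closure (j @` (@c00 R (fun k => X k))) y by rewrite hd.
  move=> /(_ (ball y m.+1%:R^-1) (nbhsx_ballx _ _ _)) [].
    by rewrite invr_gt0 ltr0n.
  move=> _ [[x cx <-] bx]; exists x; split => //.
  by move: bx; rewrite -ball_normE.
have [xs Hxs] := choice happ.
have jconv : forall e : R, 0 < e -> exists M0, forall m, (M0 <= m)%N -> `|y - j (xs m)| < e.
  move=> e e0; have [M0 _ HM0] := near_infty_natSinv_lt (PosNum e0).
  exists M0 => m hm; apply: lt_trans (proj2 (Hxs m)) _; exact: HM0.
have G1 : forall e : R, 0 < e -> exists M0, forall M M', (M0 <= M)%N -> (M0 <= M')%N ->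
    forall n, S (fun k => xs M k - xs M' k) n <= e.
  move=> e e0; have e4 : 0 < e / 4 by rewrite divr_gt0.
  have [M0 HM0] := jconv (e / 4) e4.
  exists M0 => M M' hM hM' n.
  have cM := proj1 (Hxs M); have cM' := proj1 (Hxs M').
  apply: le_trans (j_le_any _ n (c00_sub _ _ cM cM')) _.
  rewrite j_sub //.
  have := ler_distD y (j (xs M)) (j (xs M')).
  have := HM0 M hM; have := HM0 M' hM'.
  move=> h1 h2 h3; rewrite [`|j (xs M) - y|]distrC in h3; lra.
have G2 : forall k, cvgn (fun M => xs M k).
  move=> k; apply: cauchy_cvg; apply: cauchy_exP => e e0.
  have e2 : 0 < e / 2 by rewrite divr_gt0.
  have [M0 HM0] := G1 _ e2.
  exists (xs M0 k); exists M0 => // M /= hM.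
  rewrite -ball_normE /ball_ /=.
  apply: le_lt_trans (term_le_S (fun k => xs M0 k - xs M k) k) _.
  apply: le_lt_trans (HM0 M0 M (leqnn _) hM k.+1) _; lra.
pose zz : V := fun k => lim (xs M k @[M --> \oo]).
have Hzz : forall k, (fun M => xs M k) @ \oo --> zz k by move=> k; exact: G2.
have G3 : forall e : R, 0 < e -> exists M0, forall M, (M0 <= M)%N ->
    forall n, S (fun k => zz k - xs M k) n <= e.
  move=> e e0; have [M0 HM0] := G1 _ e0; exists M0 => M hM n.
  have Hc : (fun M' => S (fun k => xs M' k - xs M k) n) @ \oo --> S (fun k => zz k - xs M k) n.
    apply: (S_cvg_pt (fun M' k => xs M' k - xs M k)) => k.
    by apply: cvgB; [exact: Hzz | exact: cvg_cst].
  rewrite -(cvg_lim _ Hc) //; apply: limr_le.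
    by apply/cvg_ex; eexists; exact: Hc.
  by exists M0 => // M' /= hM'; apply: HM0.
have G4 : in_l1 zz.
  have [M0 HM0] := G3 1 ltr01.
  rewrite /in_l1; apply: nondecreasing_is_cvgn.
    by move=> a b ab; apply: S_mono.
  exists (1 + 2 * `|j (xs M0)|) => _ [n _ <-].
  have h1 := HM0 M0 (leqnn _) n.
  have h2 := j_le_any _ n (proj1 (Hxs M0)).
  have h3 : S zz n <= S (fun k => zz k - xs M0 k) n + S (xs M0) n.
    rewrite !SE -big_split /=; apply: ler_sum => k _.
    by have := ler_normD (zz k - xs M0 k) (xs M0 k); rewrite subrK.
  change (S zz n <= 1 + 2 * `|j (xs M0)|); lra.
exists zz => //.
apply/cvg_lim => //; apply/cvgrPdist_le => e e0.
have e2 : 0 < e / 2 by rewrite divr_gt0.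
have [M1 HM1] := G3 _ e2; have [M2 HM2] := jconv _ e2.
pose M := maxn M1 M2.
have [N HN] := proj1 (Hxs M).
exists N => // n /= Nn.
apply: le_trans (ler_distD (j (xs M)) _ _) _.
have h1 := HM2 M (leq_maxr _ _).
have cM := proj1 (Hxs M).
rewrite -j_sub; [|exact: cM|exact: c00_trunc].
have h2 : `|j (fun k => xs M k - trunc zz n k)| <= e / 2.
  apply: le_trans (j_le _ n _) _.
    move=> k nk; rewrite /trunc ltnNge nk /= HN ?subr0 //.
    exact: leq_trans Nn nk.
  apply: le_trans (HM1 M (leq_maxl _ _) n).
  rewrite !SE le_eqVlt; apply/orP; left; apply/eqP.
  by apply: eq_big_nat => k /andP[_ kn]; rewrite /trunc kn distrC.
lra.
Qed.
End Main.

Theorem proposition1p3 (R : realType) (X : nat -> completeNormedModType R)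
    (Xc : completeNormedModType R) (j : (forall k, X k) -> Xc)
    (j_add : forall x y, c00 x -> c00 y -> j (fun k => x k + y k) = j x + j y)
    (j_scale : forall (a : R) x, c00 x -> j (fun k => a *: x k) = a *: j x)
    (j_isom : forall x (N : nat), (forall k : nat, (N <= k)%N -> x k = 0) ->
                `|j x| = cnorm_upto x N)
    (j_dense : closure (j @` (@c00 R X)) = setT) :
  exists T : (forall k, X k) -> Xc,
    [/\ forall x, c00 x -> T x = j x,
        forall (a : R) z1 z2, in_l1 z1 -> in_l1 z2 ->
          T (fun k => a *: z1 k + z2 k) = a *: T z1 + T z2,
        forall z, in_l1 z -> normZ z / 2 <= `|T z| /\ `|T z| <= normZ z,
        forall z1 z2, in_l1 z1 -> in_l1 z2 -> T z1 = T z2 -> z1 = z2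
      & forall y : Xc, exists2 z, in_l1 z & T z = y].
Proof.
exists (@T R X Xc j); split.
- by move=> x cx; apply: T_c00.
- by move=> a z1 z2 h1 h2; apply: T_lin.
- by move=> z hz; apply: T_norm.
- move=> z1 z2 h1 h2 e.
  have hw := @l1_lin R X (-1) _ _ h2 h1.
  have hT : T R X Xc j (fun k => (-1) *: z2 k + z1 k) = (-1) *: T R X Xc j z2 + T R X Xc j z1.
    by apply: T_lin.
  rewrite e scaleN1r addNr in hT.
  have [hn _] : normZ (fun k => (-1) *: z2 k + z1 k) / 2 <=
     `|T R X Xc j (fun k => (-1) *: z2 k + z1 k)| /\ `|T R X Xc j (fun k => (-1) *: z2 k + z1 k)| <= normZ (fun k => (-1) *: z2 k + z1 k).
    by apply: T_norm.
  rewrite hT normr0 in hn.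
  have h0 : normZ (fun k => (-1) *: z2 k + z1 k) <= 0 by lra.
  apply: (@feq R X) => k; have := @l1_zero R X _ hw h0 k.
  by move/eqP; rewrite scaleN1r addrC subr_eq0 => /eqP.
- by apply: surj.
Qed.
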